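(* Let $n_0,L\in\mathbb{N}_+$, $n_1,\dots,n_L\in\mathbb{N}_+$, $h_l\in\mathrm{RL}(n_{l-1},n_l)$ for $l=1,\dots,L$, $\mathbf{h}=(h_1,\dots,h_L)$, and $\gamma\in\Gamma$. Then $\tilde{\mathcal{H}}^{(1)}(\mathcal{S}^{(1)}_{\mathbf{h}})\preceq\varphi^{(\gamma)}_{n_1}({\rm e}_{n_0})$.
   Context: $\sigma(x)=\max(0,x)$; $\mathrm{RL}(n,n')$ ($n,n'\in\mathbb{N}_+$) is the set of maps $h:\mathbb{R}^n\to\mathbb{R}^{n'}$, $h(x)_i=\sigma(\langle x,w_i\rangle+b_i)$ for some $W\in\mathbb{R}^{n'\times n}$ with rows $w_i$, $b\in\mathbb{R}^{n'}$; convention: $\mathrm{RL}(0,n')$ are constant maps $\{0\}\to\mathbb{R}^{n'}$ with $\mathcal{H}_{n'}(\mathcal{S}_h)={\rm e}_0$. Signature $S_h(x)_i=1$ iff $\langle x,w_i\rangle+b_i>0$ else $0$; $\mathcal{S}_h=\{S_h(x)\}$; $|s|=\sum_i s_i$. Multi signature $S_{\mathbf{h}}(x)=(S_{h_1}(x),S_{h_2}(h_1(x)),\dots,S_{h_L}(h_{L-1}\circ\cdots\circ h_1(x)))$, $\mathcal{S}_{\mathbf{h}}=\{S_{\mathbf{h}}(x):x\in\mathbb{R}^{n_0}\}$, and for $l\le L$, $\mathcal{S}^{(l)}_{\mathbf{h}}=\{(s_1,\dots,s_l):(s_1,\dots,s_L)\in\mathcal{S}_{\mathbf{h}}\}$.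 $V$: sequences $(v_j)_{j\in\mathbb{N}}$ of nonnegative integers with finite sum; ${\rm e}_i$ has $({\rm e}_i)_j=\delta_{ij}$; $v\preceq w$ iff $\sum_{j\ge J}v_j\le\sum_{j\ge J}w_j$ for all $J\in\mathbb{N}$; for finite families $\max_i(v^{(i)})_J=\max_i\sum_{j\ge J}v^{(i)}_j-\max_i\sum_{j\ge J+1}v^{(i)}_j$. Activation histogram $\mathcal{H}_{n'}(\mathcal{S})=(|\{s\in\mathcal{S}:|s|=j\}|)_j$. Dimension histogram: for $U\subseteq\{0,1\}^{n_1}\times\dots\times\{0,1\}^{n_l}$, $\tilde{\mathcal{H}}^{(l)}(U)=(|\{(s_1,\dots,s_l)\in U:\min(n_0,|s_1|,\dots,|s_l|)=j\}|)_{j\in\mathbb{N}}$. $\Gamma$: families $(\gamma_{n,n'})_{n'\in\mathbb{N}_+,n\in\{0,\dots,n'\}}$ in $V$ with (i) $\max\{\mathcal{H}_{n'}(\mathcal{S}_h):h\in\mathrm{RL}(n,n')\}\preceq\gamma_{n,n'}$, (ii) $n\le\tilde n\le n'\Rightarrow\gamma_{n,n'}\preceq\gamma_{\tilde n,n'}$. $\mathrm{cl}_{i^*}(v)_i=v_i$ for $i<i^*$, $\sum_{j\ge i^*}v_j$ for $i=i^*$, $0$ for $i>i^*$. $\varphi^{(\gamma)}_{n'}(v)=\sum_{n=0}^\infty v_n\,\mathrm{cl}_{\min(n,n')}(\gamma_{\min(n,n'),n'})$. *)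

(* Defs.v *)
From HB Require Import structures.
From mathcomp Require Import all_boot all_order all_algebra.
From mathcomp Require Import boolp reals.
Set Implicit Arguments. Unset Strict Implicit. Unset Printing Implicit Defensive.
Import Order.TTheory GRing.Theory Num.Theory.

(* v_j := nth 0 v j ; entries beyond size v are 0.                            *)
Definition vtail (v : seq nat) (J : nat) : nat := \sum_(J <= j < size v) nth 0 v j.

Definition vle (v w : seq nat) : Prop := forall J : nat, vtail v J <= vtail w J.

Definition ev (i : nat) : seq nat := rcons (nseq i 0) 1.

Definition vadd (v w : seq nat) : seq nat :=
  mkseq (fun j => nth 0 v j + nth 0 w j) (maxn (size v) (size w)).
Definition vscale (c : nat) (v : seq nat) : seq nat := map (fun a => c * a) v.

Definition cl (istar : nat) (v : seq nat) : seq nat :=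
  mkseq (fun i => if i < istar then nth 0 v i
                  else if i == istar then vtail v istar else 0) istar.+1.

Definition phi (gamma : nat -> nat -> seq nat) (n' : nat) (v : seq nat) : seq nat :=
  \big[vadd/[::]]_(k < size v)
     vscale (nth 0 v k) (cl (minn k n') (gamma (minn k n') n')).

Fixpoint bits (k : nat) : seq (seq bool) :=
  if k is k'.+1 then [seq b :: s | b <- [:: false; true], s <- bits k'] else [:: [::]].

Definition ones (s : seq bool) : nat := count id s.

Definition act_hist (n' : nat) (S : seq bool -> Prop) : seq nat :=
  mkseq (fun j => count (fun s => `[< S s >] && (ones s == j)) (bits n')) n'.+1.

Definition allseqs (ds : seq nat) : seq (seq (seq bool)) :=
  foldr (fun d acc => [seq s :: u | s <- bits d, u <- acc]) [:: [::]] ds.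

(* Dimension histogram  ~H^{(l)}(U), U ⊆ {0,1}^{n_1} x ... x {0,1}^{n_l},
   ds = [:: n_1; ...; n_l]; entry j counts u in U with
   min(n0, |s_1|, ..., |s_l|) = j (all such j are <= n0). *)
Definition dim_hist (n0 : nat) (ds : seq nat) (U : seq (seq bool) -> Prop) : seq nat :=
  mkseq (fun j => count (fun u => `[< U u >] && (foldr minn n0 (map ones u) == j))
                        (allseqs ds)) n0.+1.

Section Layers.
Variable R : realType.
Local Open Scope ring_scope.

Record layer (n m : nat) := Layer { lW : 'M[R]_(m, n) ; lb : 'cV[R]_m }.

Definition preact n m (h : layer n m) (x : 'cV[R]_n) : 'cV[R]_m := lW h *m x + lb h.

Definition relu (t : R) : R := Num.max 0 t.

Definition apply_layer n m (h : layer n m) (x : 'cV[R]_n) : 'cV[R]_m :=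
  map_mx relu (preact h x).

Definition sig n m (h : layer n m) (x : 'cV[R]_n) : seq bool :=
  [seq (0 < preact h x i 0) | i <- enum 'I_m].

Definition sigset n m (h : layer n m) : seq bool -> Prop :=
  fun s => exists x : 'cV[R]_n, sig h x = s.

Inductive net : nat -> Type :=
| net_nil : forall n, net n
| net_cons : forall n m, layer n m -> net m -> net n.

Fixpoint net_pos n (N : net n) : bool :=
  match N with
  | net_nil _ => true
  | net_cons _ m _ N' => (0 < m)%N && net_pos N'
  end.

Fixpoint msig n (N : net n) : 'cV[R]_n -> seq (seq bool) :=
  match N in net n return 'cV[R]_n -> seq (seq bool) with
  | net_nil _ => fun _ => [::]
  | net_cons _ _ h N' => fun x => sig h x :: msig N' (apply_layer h x)
  end.

Definition msigset n (N : net n) : seq (seq bool) -> Prop :=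
  fun u => exists x : 'cV[R]_n, msig N x = u.

Definition msigset_l (l : nat) n (N : net n) : seq (seq bool) -> Prop :=
  fun u => exists u', msigset N u' /\ take l u' = u.

(* Gamma: families (gamma_{n,n'})_{n' >= 1, 0 <= n <= n'} with
   (i)  max{H_{n'}(S_h) : h in RL(n,n')} ⪯ gamma_{n,n'}
        (for n = 0 by convention this max is e_0)
   (ii) n <= ñ <= n' -> gamma_{n,n'} ⪯ gamma_{ñ,n'} *)
Definition isGamma (gamma : nat -> nat -> seq nat) : Prop :=
  forall n' n : nat, (0 < n')%N -> (n <= n')%N ->
    (if n == 0%N then vle (ev 0) (gamma 0%N n')
     else forall h : layer n n', vle (act_hist n' (sigset h)) (gamma n n'))
    /\ (forall nt : nat, (n <= nt <= n')%N -> vle (gamma n n') (gamma nt n')).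

End Layers.
Arguments net_nil {R n}.
Arguments net_cons {R n m}.

(* Main.v *)
Require Import Defs.
From HB Require Import structures.
From mathcomp Require Import all_boot all_order all_algebra.
From mathcomp Require Import boolp reals.
From mathcomp Require Import zify.
Import GRing.Theory Num.Theory.


Lemma vtailE v J K : size v <= K -> vtail v J = \sum_(J <= j < K) nth 0 v j.
Proof.
move=> hK; rewrite /vtail; case: (leqP J (size v)) => hJ.
  rewrite (big_cat_nat hJ hK) /= [X in _ = _ + X]big_nat_cond [X in _ = _ + X]big1 ?addn0 //.
  by move=> j /andP[/andP[hj _] _]; exact: nth_default.
rewrite big_geq ?(ltnW hJ) // big_nat_cond big1 // => j /andP[/andP[hj _] _].
apply: nth_default; lia.
Qed.

Lemma vtail_vadd v w J : vtail (vadd v w) J = vtail v J + vtail w J.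
Proof.
rewrite !(vtailE _ _ _ (leq_maxl (size v) (size w))) (vtailE _ _ _ (leq_maxr (size v) (size w))).
rewrite (vtailE (vadd v w) J (maxn (size v) (size w))); last by rewrite size_mkseq.
rewrite -big_split /=; apply: eq_big_nat => j /andP[_ hj].
by rewrite nth_mkseq.
Qed.

Lemma vtail_nil J : vtail [::] J = 0.
Proof. by rewrite /vtail big_geq. Qed.

Lemma vtail_vscale c v J : vtail (vscale c v) J = c * vtail v J.
Proof.
rewrite /vtail size_map big_distrr; apply: eq_big_nat => j /andP[_ hj].
by rewrite (nth_map 0).
Qed.

Lemma vtail_cl m g J : vtail (cl m g) J = if J <= m then vtail g J else 0.
Proof.
rewrite /cl (vtailE _ _ _ (leqnn _)) size_mkseq.
have -> : \sum_(J <= j < m.+1) nth 0 (mkseq (fun i => if i < m then nth 0 g i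
                  else if i == m then vtail g m else 0) m.+1) j
   = \sum_(J <= j < m.+1) (if j < m then nth 0 g j
                  else if j == m then vtail g m else 0).
  by apply: eq_big_nat => j /andP[_ hj]; rewrite nth_mkseq.
case: leqP => hJ; last by rewrite big_geq.
rewrite big_nat_recr //= ltnn eqxx.
have hK : size g <= maxn (size g) m by apply: leq_maxl.
have hm : m <= maxn (size g) m by apply: leq_maxr.
rewrite (vtailE _ J _ hK) (vtailE _ m _ hK) (big_cat_nat hJ hm) /=.
congr (_ + _); apply: eq_big_nat => j /andP[_ hj]; by rewrite hj.
Qed.

Lemma vtail_phi gamma n1 n0 J :
  vtail (phi gamma n1 (ev n0)) J = vtail (cl (minn n0 n1) (gamma (minn n0 n1) n1)) J.
Proof.
rewrite /phi (big_morph (fun v => vtail v J) (fun v w => vtail_vadd v w J) (vtail_nil J)).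
have hs : size (ev n0) = n0.+1 by rewrite /ev size_rcons size_nseq.
rewrite hs big_ord_recr big1 ?add0n.
  by rewrite vtail_vscale /ev nth_rcons size_nseq ltnn eqxx mul1n.
move=> i _; rewrite vtail_vscale /ev nth_rcons size_nseq (ltn_ord i) nth_nseq (ltn_ord i).
by rewrite mul0n.
Qed.

Lemma sum_eq1 n J K : \sum_(J <= j < K) (n == j : nat) = (J <= n < K).
Proof.
elim: K => [|K IH]; first by rewrite big_geq //; case: (J <= n).
case: (leqP J K) => hJ.
  rewrite big_nat_recr //= IH; case: (eqVneq n K) => [->|hn] /=.
    by rewrite ltnn hJ ltnSn andbF.
  by rewrite addn0 ltnS (leq_eqVlt n) (negbTE hn).
rewrite big_geq //; case: (leqP J n) => //= hn; by rewrite ltnS leqNgt (leq_trans hJ hn).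
Qed.

Lemma count_sum (T : Type) (a : pred T) (g : T -> nat) t J K :
  \sum_(J <= j < K) count (fun x => a x && (g x == j)) t
  = count (fun x => a x && (J <= g x < K)) t.
Proof.
elim: t => [|x t IH] /=; first by rewrite big1.
rewrite big_split /= IH; congr (_ + _).
case: (a x) => /=; last by rewrite big1.
exact: sum_eq1.
Qed.

Lemma bits_size k s : s \in bits k -> size s = k.
Proof.
elim: k s => [|k IH] s; first by rewrite /= inE => /eqP ->.
by move=> /allpairsP [[b s'] /= [_ /IH hs ->]] /=; rewrite hs.
Qed.

Lemma count_allseqs1 (p : pred (seq (seq bool))) n :
  count p (allseqs [:: n]) = count (fun s => p [:: s]) (bits n).
Proof. by rewrite /allseqs /=; elim: (bits n) => //= s l ->. Qed.

Lemma vtail_dim n0 n1 U J :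
  vtail (dim_hist n0 [:: n1] U) J =
  count (fun s => `[< U [:: s] >] && (J <= minn (ones s) n0 < n0.+1)) (bits n1).
Proof.
rewrite /dim_hist (vtailE _ _ n0.+1) ?size_mkseq //.
rewrite (eq_big_nat _ _ (F2 := fun j => count (fun u => `[< U u >] && (foldr minn n0 (map ones u) == j)) (allseqs [:: n1]))); last first.
  by move=> j /andP[_ hj]; rewrite nth_mkseq.
by rewrite count_sum count_allseqs1.
Qed.

Lemma vtail_act n1 S J :
  vtail (act_hist n1 S) J =
  count (fun s => `[< S s >] && (J <= ones s < n1.+1)) (bits n1).
Proof.
rewrite /act_hist (vtailE _ _ n1.+1) ?size_mkseq //.
rewrite (eq_big_nat _ _ (F2 := fun j => count (fun s => `[< S s >] && (ones s == j)) (bits n1))); last first.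
  by move=> j /andP[_ hj]; rewrite nth_mkseq.
by rewrite count_sum.
Qed.

Lemma count_le_in (T : eqType) (a b : pred T) t :
  {in t, forall x, a x -> b x} -> count a t <= count b t.
Proof.
elim: t => //= x t IH H; apply: leq_add; last by apply: IH => y hy; apply: H; rewrite inE hy orbT.
by case: (boolP (a x)) => //= /(H x (mem_head _ _)) ->.
Qed.

Lemma ones_bits k s : s \in bits k -> ones s <= k.
Proof. by move=> /bits_size <-; rewrite /ones count_size. Qed.

Section SI.
Local Open Scope ring_scope.
Lemma sigset_id (R : realType) n s : size s = n -> sigset (@Layer R n n 1%:M 0) s.
Proof.
move=> hs; exists (\col_i (if nth false s i then 1 else 0 : R)).
rewrite /sig /preact /= mul1mx addr0.
transitivity [seq nth false s i | i <- map val (enum 'I_n)]; last first.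
  by rewrite val_enum_ord; have := mkseq_nth false s; rewrite hs.
rewrite -map_comp; apply: eq_map => i /=; rewrite mxE.
by case: (nth false s i); rewrite ?ltr01 ?ltxx.
Qed.
End SI.

Lemma msig1 (R : realType) n0 n1 (h1 : layer R n0 n1) (N' : net R n1) s :
  `[< msigset_l 1 (net_cons h1 N') [:: s] >] = `[< sigset h1 s >].
Proof.
apply/idP/idP => /asboolP H; apply/asboolP.
  by case: H => u' [[x <-]] /= [<-]; exists x.
case: H => x hx; exists (msig (net_cons h1 N') x); split; first by exists x.
by rewrite /= take0 hx.
Qed.




Theorem mainTheorem3 (R : realType) (n0 n1 : nat) (h1 : layer R n0 n1) (N' : net R n1)
    (gamma : nat -> nat -> seq nat) :
  (0 < n0)%N -> (0 < n1)%N -> net_pos N' -> isGamma R gamma ->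
  vle (dim_hist n0 [:: n1] (msigset_l 1 (net_cons h1 N'))) (phi gamma n1 (ev n0)).
Proof.
move=> hn0 hn1 _ hG J.
rewrite vtail_phi vtail_cl vtail_dim.
rewrite (eq_count (a2 := fun s => `[< sigset h1 s >] && (J <= minn (ones s) n0 < n0.+1))); last first.
  by move=> s; rewrite msig1.
case: (leqP J (minn n0 n1)) => hJ; last first.
  rewrite (eq_in_count (a2 := pred0)) ?count_pred0 // => s /ones_bits hs /=.
  apply/negbTE; apply/negP => /andP[_ /andP[h1' h2']]; lia.
rewrite (eq_in_count (a2 := fun s => `[< sigset h1 s >] && (J <= ones s < n1.+1))); last first.
  move=> s /ones_bits hs /=; congr (_ && _); apply/idP/idP => /andP[h h']; apply/andP; split; lia.
rewrite -vtail_act.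
case: (leqP n0 n1) => hn.
  have hm : minn n0 n1 = n0 by apply/minn_idPl.
  have [H _] := hG n1 n0 hn1 hn.
  by move: H; rewrite (negbTE (lt0n_neq0 hn0)); move=> /(_ h1 J).
have hm : minn n0 n1 = n1 by apply/minn_idPr/ltnW.
have [H _] := hG n1 n1 hn1 (leqnn _).
move: H; rewrite (negbTE (lt0n_neq0 hn1)) => /(_ (@Layer R n1 n1 1%:M 0) J) H.
apply: leq_trans H; rewrite !vtail_act; apply: count_le_in => s hs /andP[_ h]; rewrite h andbT.
by apply/asboolP; apply: sigset_id; apply: bits_size.
Qed.
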